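(* For every odd integer $n\geq 3$ and every integer $m\geq 2$, the graph $mW_n$ (the disjoint union of $m$ copies of the wheel $W_n$) is $C_3$-supermagic.
   Context: All graphs are finite and simple. For a graph $H$, a graph $G=(V,E)$ has an $H$-covering if every edge of $G$ belongs to a subgraph of $G$ isomorphic to $H$. For such $G$, an $H$-magic labeling is a bijection $\lambda: V\cup E\to\{1,2,\dots,|V|+|E|\}$ for which there is a constant $c$ such that for every subgraph $H'=(V',E')$ of $G$ isomorphic to $H$, $\sum_{v\in V'}\lambda(v)+\sum_{e\in E'}\lambda(e)=c$. It is $H$-supermagic if moreover $\{\lambda(v):v\in V\}=\{1,\dots,|V|\}$; $G$ is $H$-supermagic if it admits such a labeling. $C_k$ is the cycle of length $k$. $mG$ denotes the disjoint union of $m$ copies of $G$. The wheel $W_n=K_1+C_n$ has vertices $c,v_1,\dots,v_n$ and edges $cv_i$ ($1\le i\le n$) and $v_iv_{i+1}$ ($1\le i\le n$, indices modulo $n$). *)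

(* Defs.v *)
From mathcomp Require Import all_boot.
Set Implicit Arguments. Unset Strict Implicit. Unset Printing Implicit Defensive.

Section Graphs.
Variables (T : finType) (e : rel T).

Definition simple_graph : Prop := symmetric e /\ irreflexive e.

Definition edges : {set {set T}} :=
  [set A : {set T} | [exists x, exists y, e x y && (A == [set x; y])]].

(* The triangles (subgraphs isomorphic to C_3): three pairwise adjacent
   vertices x, y, z, together with the edges xy, yz, zx. *)
Definition is_triangle (x y z : T) : Prop := e x y /\ e y z /\ e z x.

Definition C3_covering : Prop :=
  forall x y, e x y -> exists z, is_triangle x y z.

(* Labels on V ∪ E: inl v for vertices, inr A for edges A \in edges. *)
Definition in_VE (u : T + {set T}) : bool :=
  match u with inl _ => true | inr A => A \in edges end.

Definition C3_magic_labeling (f : T + {set T} -> nat) : Prop :=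
  {in in_VE &, injective f} /\
  (forall u, in_VE u -> 1 <= f u <= #|T| + #|edges|) /\
  (forall k, 1 <= k <= #|T| + #|edges| -> exists2 u, in_VE u & f u = k) /\
  exists c : nat, forall x y z, is_triangle x y z ->
    f (inl x) + f (inl y) + f (inl z)
    + f (inr [set x; y]) + f (inr [set y; z]) + f (inr [set z; x]) = c.

(* C_3-supermagic: additionally the vertices get labels {1,...,|V|}. *)
Definition C3_supermagic_labeling (f : T + {set T} -> nat) : Prop :=
  C3_magic_labeling f /\ forall v : T, f (inl v) <= #|T|.

Definition C3_supermagic : Prop :=
  C3_covering /\ exists f, C3_supermagic_labeling f.

End Graphs.

(* The wheel W_n on vertices option 'I_n: None is the centre c,
   Some i is the rim vertex v_(i+1); rim edges v_i v_(i+1) indices mod n. *)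
Definition wheel_adj (n : nat) (u w : option 'I_n) : bool :=
  match u, w with
  | None, None => false
  | None, Some _ | Some _, None => true
  | Some i, Some j => (j == i.+1 %% n :> nat) || (i == j.+1 %% n :> nat)
  end.

Definition mW_adj (m n : nat) : rel ('I_m * option 'I_n) :=
  fun a b => (a.1 == b.1) && wheel_adj a.2 b.2.
Arguments mW_adj : clear implicits.
Arguments wheel_adj : clear implicits.

(* Main.v *)
Require Import Defs.
From mathcomp Require Import all_boot.
From mathcomp Require Import zify.
Set Implicit Arguments. Unset Strict Implicit. Unset Printing Implicit Defensive.

Lemma surj_inj (P : finType) (lab : P -> nat) :
  (forall p, 1 <= lab p <= #|P|) ->
  (forall k, 1 <= k <= #|P| -> exists p, lab p = k) ->
  injective lab.
Proof.
move=> Hr Hs; apply/injectiveP; rewrite /injectiveb /dinjectiveb.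
apply: (@leq_size_uniq _ (iota 1 #|P|)); first exact: iota_uniq.
- move=> k; rewrite mem_iota => /andP[k1 k2].
  have [p <-] := Hs k (ltac:(lia)); exact: map_f (mem_enum _ _).
- by rewrite size_map size_iota -cardE.
Qed.

Definition succ (n : nat) (i : 'I_n) : 'I_n :=
  Ordinal (ltn_pmod i.+1 (leq_ltn_trans (leq0n i) (ltn_ord i))).

Lemma succE n (i : 'I_n) : (succ i : nat) = if i.+1 == n then 0 else i.+1.
Proof.
rewrite /succ /=; case: eqP => [->|ne]; first by rewrite modnn.
by rewrite modn_small //; have := ltn_ord i; lia.
Qed.

Lemma eq_succ n (i j : 'I_n) : (j == succ i) = (val j == i.+1 %% n).
Proof. by []. Qed.


Definition hw m n (sp rm : 'I_m -> 'I_n -> nat) (k : 'I_m) (a b : option 'I_n) : nat :=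
  match a, b with
  | None, Some i => sp k i
  | Some i, Some j => if j == succ i then rm k i else 0
  | _, _ => 0
  end.

Definition hh m n (sp rm : 'I_m -> 'I_n -> nat) (x y : 'I_m * option 'I_n) : nat :=
  if x.1 == y.1 then hw sp rm x.1 x.2 y.2 else 0.

Definition flab m n (vl : 'I_m -> option 'I_n -> nat) (sp rm : 'I_m -> 'I_n -> nat)
  (u : ('I_m * option 'I_n) + {set 'I_m * option 'I_n}) : nat :=
  match u with
  | inl v => vl v.1 v.2
  | inr A => \sum_(x in A) \sum_(y in A) hh sp rm x y
  end.

Definition gE m n (p : 'I_m * ('I_n + 'I_n)) : {set 'I_m * option 'I_n} :=
  match p.2 with
  | inl i => [set (p.1, None); (p.1, Some i)]
  | inr i => [set (p.1, Some i); (p.1, Some (succ i))]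
  end.

Definition elab m n (sp rm : 'I_m -> 'I_n -> nat) (p : 'I_m * ('I_n + 'I_n)) : nat :=
  match p.2 with inl i => sp p.1 i | inr i => rm p.1 i end.

Definition lab m n (vl : 'I_m -> option 'I_n -> nat) (sp rm : 'I_m -> 'I_n -> nat)
  (q : ('I_m * option 'I_n) + ('I_m * ('I_n + 'I_n))) : nat :=
  match q with inl v => vl v.1 v.2 | inr p => elab sp rm p end.

Lemma sum2 (T : finType) (x y : T) (F : T -> nat) :
  x != y -> \sum_(i in [set x; y]) F i = F x + F y.
Proof.
move=> ne; rewrite big_setU1 ?big_set1 //.
by rewrite in_set1.
Qed.

Lemma succS n (i : 'I_n) : ((succ i : nat) = i.+1 /\ i.+1 < n) \/ ((succ i : nat) = 0 /\ i.+1 = n).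
Proof.
rewrite succE; have := ltn_ord i; case: eqP => e ?; [right|left]; lia.
Qed.

Lemma succ_neq n (i : 'I_n) : 2 <= n -> succ i != i.
Proof.
move=> n2; have := succS i; move=> H; apply/negP => /eqP /(congr1 (@nat_of_ord _)) E; move: H E; rewrite /=; lia.
Qed.

Lemma succ2_neq n (i : 'I_n) : 3 <= n -> i != succ (succ i).
Proof.
move=> n3; have := succS i; have := succS (succ i); move=> H1 H2; apply/negP => /eqP /(congr1 (@nat_of_ord _)) E; lia.
Qed.

Lemma hw_diag m n sp rm k (a : option 'I_n) : 2 <= n -> @hw m n sp rm k a a = 0.
Proof.
move=> n2; case: a => [i|] //=; rewrite eq_sym (negbTE (succ_neq i n2)) //.
Qed.

Definition ew m n (sp rm : 'I_m -> 'I_n -> nat) k (a b : option 'I_n) :=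
  hw sp rm k a b + hw sp rm k b a.

Lemma wadj_rim n (i j : 'I_n) :
  wheel_adj n (Some i) (Some j) = (j == succ i) || (i == succ j).
Proof. by []. Qed.

Lemma hh_same m n sp rm (k : 'I_m) (a b : option 'I_n) :
  hh sp rm (k, a) (k, b) = hw sp rm k a b.
Proof. by rewrite /hh eqxx. Qed.

Lemma flab_pair m n vl sp rm (k : 'I_m) (a b : option 'I_n) : 2 <= n -> a != b ->
  @flab m n vl sp rm (inr [set (k, a); (k, b)]) = ew sp rm k a b.
Proof.
move=> n2 ne; have ne' : (k, a) != (k, b) by rewrite xpair_eqE eqxx.
rewrite /= sum2 // !sum2 // ?(eq_sym (k,b)) // !hh_same !hw_diag // /ew; lia.
Qed.

Lemma flab_gE m n vl sp rm (p : 'I_m * ('I_n + 'I_n)) : 3 <= n ->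
  flab vl sp rm (inr (gE p)) = elab sp rm p.
Proof.
move=> n3; case: p => k [i|i].
  have -> : gE (k, inl i) = [set (k,None); (k, Some i)] by [].
  rewrite (flab_pair _ _ _ k (a:=None) (b:=Some i)) //; first by rewrite /ew /= addn0. lia.
have -> : gE (k, inr i) = [set (k,Some i); (k, Some (succ i))] by [].
rewrite (flab_pair _ _ _ k (a:=Some i) (b:=Some (succ i))) //; last 2 first.
- lia.
- by apply/negP => /eqP [] /eqP; rewrite eq_sym (negbTE (succ_neq _ _)) //; lia.
rewrite /ew /= eqxx (negbTE (succ2_neq _ n3)) addn0 //.
Qed.

Lemma wadj_succ n (i : 'I_n) : wheel_adj n (Some i) (Some (succ i)).
Proof. by rewrite wadj_rim eqxx. Qed.

Lemma gE_edges m n (p : 'I_m * ('I_n + 'I_n)) : gE p \in edges (mW_adj m n).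
Proof.
rewrite inE; case: p => k [i|i].
  by apply/existsP; exists (k, None); apply/existsP; exists (k, Some i); rewrite /mW_adj /= !eqxx.
apply/existsP; exists (k, Some i); apply/existsP; exists (k, Some (succ i)).
by rewrite /mW_adj eqxx wadj_succ [gE _]/= eqxx.
Qed.

Lemma edges_gE m n (A : {set 'I_m * option 'I_n}) :
  A \in edges (mW_adj m n) -> exists p, A = gE p.
Proof.
rewrite inE => /existsP[[kx ax] /existsP[[ky ay] /andP[/andP[/= /eqP ek ad] /eqP ->]]].
subst ky; case: ax ad => [i|]; case: ay => [j|] //= ad.
- move: ad; rewrite -/(wheel_adj n (Some i) (Some j)) wadj_rim => /orP[] /eqP ->.
    by exists (kx, inr i).
  by exists (kx, inr j); rewrite setUC.
- by exists (kx, inl i); rewrite setUC.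
- by exists (kx, inl j).
Qed.

Lemma madj_inv m n (x y : 'I_m * option 'I_n) :
  mW_adj m n x y -> x.1 = y.1 /\ wheel_adj n x.2 y.2.
Proof. by case/andP => /eqP. Qed.

Lemma wadj_neq n (a b : option 'I_n) : 2 <= n -> wheel_adj n a b -> a != b.
Proof.
move=> n2; case: a => [i|]; case: b => [j|] //= H.
apply/negP => /eqP [] E; subst j; move: H.
by rewrite -/(wheel_adj n (Some i) (Some i)) wadj_rim eq_sym (negbTE (succ_neq _ n2)).
Qed.

Lemma covering m n : 3 <= n -> C3_covering (mW_adj m n).
Proof.
move=> n3 [kx ax] [ky ay] /madj_inv [/= <- H].
case: ax H => [i|]; case: ay => [j|] //= H.
- exists (kx, None); rewrite /is_triangle /mW_adj /= eqxx; split => //.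
- exists (kx, Some (succ i)); rewrite /is_triangle /mW_adj /= eqxx /=.
  split => //; split => //.
  by rewrite -/(wheel_adj n (Some (succ i)) (Some i)) wadj_rim eqxx orbT.
- exists (kx, Some (succ j)); rewrite /is_triangle /mW_adj /= eqxx /=.
  by split => //; split => //; rewrite -/(wheel_adj n (Some j) (Some (succ j))) wadj_succ.
Qed.

Lemma center_tri m n (vl : 'I_m -> option 'I_n -> nat) sp rm c k (i j : 'I_n) :
  3 <= n ->
  (forall k i, vl k None + vl k (Some i) + vl k (Some (succ i)) + sp k i + sp k (succ i) + rm k i = c) ->
  wheel_adj n (Some i) (Some j) ->
  vl k None + vl k (Some i) + vl k (Some j) + ew sp rm k None (Some i)
   + ew sp rm k (Some i) (Some j) + ew sp rm k (Some j) None = c.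
Proof.
move=> n3 HC; rewrite wadj_rim => /orP[] /eqP ->; rewrite /ew /=.
- rewrite eqxx (negbTE (succ2_neq _ n3)); have := HC k i; lia.
- rewrite eqxx (negbTE (succ2_neq _ n3)); have := HC k j; lia.
Qed.

Lemma tri_w m n (vl : 'I_m -> option 'I_n -> nat) sp rm c k (a b d : option 'I_n) :
  3 <= n ->
  (forall k i, vl k None + vl k (Some i) + vl k (Some (succ i)) + sp k i + sp k (succ i) + rm k i = c) ->
  (forall k (i j l : 'I_n), wheel_adj n (Some i) (Some j) -> wheel_adj n (Some j) (Some l) ->
     wheel_adj n (Some l) (Some i) ->
     vl k (Some i) + vl k (Some j) + vl k (Some l) + ew sp rm k (Some i) (Some j)
      + ew sp rm k (Some j) (Some l) + ew sp rm k (Some l) (Some i) = c) ->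
  wheel_adj n a b -> wheel_adj n b d -> wheel_adj n d a ->
  vl k a + vl k b + vl k d + ew sp rm k a b + ew sp rm k b d + ew sp rm k d a = c.
Proof.
move=> n3 HC HR.
case: a => [i|]; case: b => [j|]; case: d => [l|] //.
- exact: HR.
all: move=> H1 H2 H3; first [have := center_tri k n3 HC H1; lia
  | have := center_tri k n3 HC H2; lia | have := center_tri k n3 HC H3; lia].
Qed.

Lemma sum_pair m n (vl : 'I_m -> option 'I_n -> nat) sp rm (k : 'I_m) (a b : option 'I_n) : 2 <= n -> a != b ->
  \sum_(x in [set (k, a); (k, b)]) \sum_(y in [set (k, a); (k, b)]) hh sp rm x y = ew sp rm k a b.
Proof. exact: (flab_pair vl). Qed.

Definition GG m n (q : ('I_m * option 'I_n) + ('I_m * ('I_n + 'I_n))) :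
  ('I_m * option 'I_n) + {set 'I_m * option 'I_n} :=
  match q with inl v => inl v | inr p => inr (gE p) end.

Lemma frame m n (vl : 'I_m -> option 'I_n -> nat) sp rm c :
  3 <= n ->
  (forall q, 1 <= lab vl sp rm q <= m * n.+1 + m * (n + n)) ->
  (forall k, 1 <= k <= m * n.+1 + m * (n + n) -> exists q, lab vl sp rm q = k) ->
  (forall k a, vl k a <= m * n.+1) ->
  (forall k i, vl k None + vl k (Some i) + vl k (Some (succ i)) + sp k i + sp k (succ i) + rm k i = c) ->
  (forall k (i j l : 'I_n), wheel_adj n (Some i) (Some j) -> wheel_adj n (Some j) (Some l) ->
     wheel_adj n (Some l) (Some i) ->
     vl k (Some i) + vl k (Some j) + vl k (Some l) + ew sp rm k (Some i) (Some j)
      + ew sp rm k (Some j) (Some l) + ew sp rm k (Some l) (Some i) = c) ->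
  C3_supermagic (mW_adj m n).
Proof.
move=> n3 Hr Hs Hv HC HR; split; first exact: covering.
set P := (('I_m * option 'I_n) + ('I_m * ('I_n + 'I_n)))%type.
have cardP : #|{: P}| = m * n.+1 + m * (n + n).
  by rewrite card_sum !card_prod card_option !card_ord card_sum !card_ord.
have injL : injective (lab vl sp rm : P -> nat).
  by apply: surj_inj; rewrite cardP.
have injE : injective (@gE m n).
  move=> p1 p2 E; have : lab vl sp rm (inr p1) = lab vl sp rm (inr p2).
    by rewrite /= -!(flab_gE vl) // E.
  by move/injL => [].
have edgesE : edges (mW_adj m n) = [set gE p | p : ('I_m * ('I_n + 'I_n))%type].
  apply/setP => A; apply/idP/idP.
    by case/edges_gE => p ->; apply: imset_f.
  by case/imsetP => p _ ->; apply: gE_edges.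
have cardE : #|edges (mW_adj m n)| = m * (n + n).
  by rewrite edgesE card_imset // card_prod card_sum !card_ord.
have cardT : #|{: ('I_m * option 'I_n)%type}| = m * n.+1.
  by rewrite card_prod card_option !card_ord.
have flabG q : flab vl sp rm (GG q) = lab vl sp rm q.
  by case: q => [v|p] //; apply: flab_gE.
have inG u : in_VE (mW_adj m n) u -> exists q : P, u = GG q.
  case: u => [v|A] /=; first by exists (inl v).
  by case/edges_gE => p ->; exists (inr p).
have Gin (q : P) : in_VE (mW_adj m n) (GG q).
  by case: q => [v|p] //=; apply: gE_edges.
exists (flab vl sp rm); split; last by move=> v; rewrite /= cardT.
split; [|split; [|split]].
- move=> u v /inG [q1 ->] /inG [q2 ->]; rewrite !flabG => /injL -> //.
- by move=> u /inG [q ->]; rewrite flabG cardT cardE.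
- move=> k; rewrite cardT cardE => /Hs [q Hq]; exists (GG q) => //.
  by rewrite flabG.
- exists c => [[kx a]] [ky b] [kz d] [/madj_inv [/= E1 H1] [/madj_inv [/= E2 H2] /madj_inv [/= E3 H3]]].
  subst ky kz.
  rewrite !(sum_pair vl); try (by apply: wadj_neq => //; lia); try lia.
  exact: tri_w.
Qed.

Definition sg (n x : nat) := if x %% 2 == 1 then (n.*2 - x.+1) %/ 2 else (n - x.+1) %/ 2.
Definition tu (n x : nat) := if x.+1 < n then n - x.+2 else n - 1.
Definition sginv (n s : nat) := if s <= n./2 then n - (s.*2).+1 else n.*2 - (s.*2).+1.
Definition tuinv (n q : nat) := if q.+1 < n then n - q.+2 else n - 1.

Lemma sg_inv n s : n %% 2 = 1 -> s < n -> sg n (sginv n s) = s /\ sginv n s < n.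
Proof.
move=> no sn; rewrite /sg /sginv; case: (leqP s n./2) => H.
  case: eqP => E; split; lia.
case: eqP => E; split; lia.
Qed.

Lemma tu_inv n q : 2 <= n -> q < n -> tu n (tuinv n q) = q /\ tuinv n q < n.
Proof.
move=> n2 qn; rewrite /tu /tuinv; case: (ltnP q.+1 n) => H.
  case: ifP => E; split; lia.
case: ifP => E; split; lia.
Qed.

Lemma sg_lt n x : x < n -> sg n x < n.
Proof. by rewrite /sg; case: eqP => E; lia. Qed.

Lemma tu_lt n x : 1 <= n -> tu n x < n.
Proof. by rewrite /tu; case: ifP => E; lia. Qed.

Lemma hc_sum n (i : 'I_n) : n %% 2 = 1 -> 3 <= n ->
  i + succ i + sg n i + sg n (succ i) + tu n i = 5 * n./2.
Proof.
move=> no n3; have := succS i; have := ltn_ord i; rewrite /sg /tu.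
case: ifP => E1; case: ifP => E2; case: ifP => E3; move/eqP: E1; move/eqP: E2; lia.
Qed.

Definition vl5 m n (k : 'I_m) (a : option 'I_n) : nat :=
  match a with None => k.+1 + m * n | Some i => k.+1 + m * i end.
Definition sp5 m n (k : 'I_m) (i : 'I_n) : nat := m * n.+1 + (m - k) + m * (n + sg n i).
Definition rm5 m n (k : 'I_m) (i : 'I_n) : nat := m * n.+1 + (m - k) + m * tu n i.

Lemma no_rim_tri n (i j l : 'I_n) : 5 <= n ->
  wheel_adj n (Some i) (Some j) -> wheel_adj n (Some j) (Some l) -> wheel_adj n (Some l) (Some i) -> False.
Proof.
move=> n5; rewrite !wadj_rim.
have := succS i; have := succS j; have := succS l.
move=> Hl Hj Hi.
case/orP => /eqP /(congr1 (@nat_of_ord _)) E1;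
case/orP => /eqP /(congr1 (@nat_of_ord _)) E2;
case/orP => /eqP /(congr1 (@nat_of_ord _)) E3; lia.
Qed.

Lemma case5 n m : odd n -> 5 <= n -> 1 <= m -> C3_supermagic (mW_adj m n).
Proof.
move=> odn n5 m1.
have no : n %% 2 = 1 by rewrite modn2 odn.
apply: (@frame m n (@vl5 m n) (@sp5 m n) (@rm5 m n)
   (3 * m + 3 + 3 * (m * n.+1) + 3 * (m * n) + m * (5 * n./2))).
- lia.
- case=> [[k [i|]]|[k [i|i]]] /=.
  + have := ltn_ord k; have := leq_mul (leqnn m) (ltnW (ltn_ord i)); lia.
  + have := ltn_ord k; lia.
  + rewrite /elab /sp5 /=; have := ltn_ord k.
    have Hs : (n + sg n i).+1 <= n + n by have := sg_lt (ltn_ord i); lia.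
    have := leq_mul (leqnn m) Hs.
    lia.
  + rewrite /elab /rm5 /=; have := ltn_ord k.
    have Hs : (tu n i).+1 <= n + n by have := @tu_lt n i (ltac:(lia)); lia.
    have := leq_mul (leqnn m) Hs.
    lia.
- move=> k0 Hk.
  have m0 : 0 < m by lia.
  case: (leqP k0 (m * n.+1)) => Hk1.
  + have Ed := divn_eq k0.-1 m.
    have Hr : k0.-1 %% m < m := ltn_pmod _ m0.
    have Hq : k0.-1 %/ m < n.+1 by rewrite ltn_divLR //; lia.
    move: Ed Hr Hq; set q := k0.-1 %/ m; set r := k0.-1 %% m => Ed Hr Hq.
    case: (ltnP q n) => Hqn.
    * by exists (inl (Ordinal Hr, Some (Ordinal Hqn))); rewrite /=; lia.
    * have qn : q = n by lia.
      rewrite qn in Ed.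
      by exists (inl (Ordinal Hr, None)); rewrite /=; lia.
  + have Ed := divn_eq (k0 - m * n.+1).-1 m.
    have Hr : (k0 - m * n.+1).-1 %% m < m := ltn_pmod _ m0.
    have Hq : (k0 - m * n.+1).-1 %/ m < n + n by rewrite ltn_divLR //; lia.
    move: Ed Hr Hq; set q := _ %/ m; set r := _ %% m => Ed Hr Hq.
    have Hj : m - r.+1 < m by lia.
    case: (ltnP q n) => Hqn.
    * have [Ht Hi] := @tu_inv n q (ltac:(lia)) Hqn.
      exists (inr (Ordinal Hj, inr (Ordinal Hi))); rewrite /= /elab /rm5 /= Ht; lia.
    * have [Ht Hi] := @sg_inv n (q - n) no (ltac:(lia)).
      exists (inr (Ordinal Hj, inl (Ordinal Hi))); rewrite /= /elab /sp5 /= Ht.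
      have -> : n + (q - n) = q by lia.
      lia.
- move=> k [i|] /=; have := ltn_ord k; last lia.
  have := leq_mul (leqnn m) (ltnW (ltn_ord i)); lia.
- move=> k i; rewrite /vl5 /sp5 /rm5.
  have H := congr1 (muln m) (hc_sum i no (ltnW (ltnW n5))).
  rewrite !mulnDr in H; have := ltn_ord k; lia.
- move=> k i j l H1 H2 H3; case: (no_rim_tri n5 H1 H2 H3).
Qed.

Definition B0 := [:: 1; 4; 6; 7; 13; 16; 18; 17; 9; 14].
Definition B1 := [:: 2; 3; 5; 8; 15; 12; 19; 20; 11; 10].
Definition S0 := [:: 1; 2; 6; 11; 20; 30; 23; 25; 13; 27].
Definition S1 := [:: 3; 4; 7; 12; 28; 24; 16; 18; 22; 21].
Definition S2 := [:: 5; 8; 9; 10; 29; 19; 15; 14; 26; 17].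

Definition G0 := [:: 0; 1; 4; 7; 13; 20; 15; 16; 8; 18].
Definition G1 := [:: 2; 2; 4; 8; 18; 16; 10; 12; 14; 14].
Definition G2 := [:: 3; 5; 6; 6; 19; 12; 10; 9; 17; 11].
Definition SG (s id : nat) : nat := nth 0 (if s == 0 then G0 else if s == 1 then G1 else G2) id.


Definition BB (i id : nat) : nat := nth 0 (if i == 0 then B0 else B1) id.
Definition SS (s id : nat) : nat := nth 0 (if s == 0 then S0 else if s == 1 then S1 else S2) id.

Lemma SG_SS s id : s < 3 -> id < 10 -> SG s id = (SS s id).-1 - (SS s id).-1 %/ 3.
Proof. by case: s => [|[|[|]]] //; do 10 (case: id => [|id] //). Qed.

Lemma TB i id : i < 2 -> id < 10 -> 1 <= BB i id <= 20 /\ (id < 4 -> BB i id <= 8).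
Proof.
by case: i => [|[|]] //; do 10 (case: id => [|id] //).
Qed.

Lemma TS s id : s < 3 -> id < 10 -> 1 <= SS s id <= 30 /\ (id < 4 -> SS s id <= 12).
Proof.
by case: s => [|[|[|]]] //; do 10 (case: id => [|id] //).
Qed.

Lemma invB L : 1 <= L <= 20 -> exists i id, [/\ i < 2, id < 10 & BB i id = L].
Proof.
move=> HL.
have : all (fun L => has (fun p => (p.1 < 2) && (p.2 < 10) && (BB p.1 p.2 == L))
   [seq (x, y) | x <- iota 0 2, y <- iota 0 10]) (iota 1 20) by [].
move/allP/(_ L); rewrite mem_iota (_ : 1 + 20 = 21) // => /(_ (ltac:(lia))) /hasP [[i id] _ /= /andP[/andP[Hi Hid] /eqP E]].
by exists i, id.
Qed.

Lemma invS r : 1 <= r <= 30 -> exists s id, [/\ s < 3, id < 10 & SS s id = r].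
Proof.
move=> HL.
have : all (fun L => has (fun p => (p.1 < 3) && (p.2 < 10) && (SS p.1 p.2 == L))
   [seq (x, y) | x <- iota 0 3, y <- iota 0 10]) (iota 1 30) by [].
move/allP/(_ r); rewrite mem_iota (_ : 1 + 30 = 31) // => /(_ (ltac:(lia))) /hasP [[i id] _ /= /andP[/andP[Hi Hid] /eqP E]].
by exists i, id.
Qed.

Goal forall (i : 'I_3), i = Ordinal (isT : 1 < 3) -> (succ i : nat) = 2.
move=> i ->. by []. Qed.

Definition tt m := (m - 3 * (m %% 2)) %/ 2.
Definition lbl3 m j id :=
  if j < (tt m).*2 then
    let L := BB (j %% 2) id in
    tt m * L.-1 + m %% 2 * (L + L.-1./2) + (if id < 4 then j./2 else tt m - (j./2).+1) + 1
  else tt m * SG (j - (tt m).*2) id + SS (j - (tt m).*2) id.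

Lemma tri3 m j : 2 <= m -> j < m ->
  [/\ lbl3 m j 0 + lbl3 m j 1 + lbl3 m j 2 + lbl3 m j 4 + lbl3 m j 5 + lbl3 m j 7 = 27 * m + 3,
      lbl3 m j 0 + lbl3 m j 2 + lbl3 m j 3 + lbl3 m j 5 + lbl3 m j 6 + lbl3 m j 8 = 27 * m + 3,
      lbl3 m j 0 + lbl3 m j 3 + lbl3 m j 1 + lbl3 m j 6 + lbl3 m j 4 + lbl3 m j 9 = 27 * m + 3 &
      lbl3 m j 1 + lbl3 m j 2 + lbl3 m j 3 + lbl3 m j 7 + lbl3 m j 8 + lbl3 m j 9 = 27 * m + 3].
Proof.
move=> m2 jm; rewrite /lbl3.
have Ht : m = (tt m).*2 + 3 * (m %% 2) by rewrite /tt; lia.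
have Ho : m %% 2 < 2 by lia.
move: Ht Ho; set t := tt m; set o := m %% 2 => Ht Ho.
case: (ltnP j t.*2) => Hj.
  have [E|E] : j %% 2 = 0 \/ j %% 2 = 1 by lia.
    rewrite E /BB /=; split; lia.
  rewrite E /BB /=; split; lia.
have [E|[E|E]] : j - t.*2 = 0 \/ j - t.*2 = 1 \/ j - t.*2 = 2 by lia.
- rewrite E /SS /SG /=; split; lia.
- rewrite E /SS /SG /=; split; lia.
- rewrite E /SS /SG /=; split; lia.
Qed.

Lemma tt_eq m : 2 <= m -> m = (tt m).*2 + 3 * (m %% 2).
Proof. rewrite /tt; lia. Qed.

Lemma lbl3_base m i id r : i < 2 -> r < tt m ->
  lbl3 m (r.*2 + i) id = tt m * (BB i id).-1 + m %% 2 * (BB i id + (BB i id).-1./2)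
     + (if id < 4 then r else tt m - r.+1) + 1.
Proof.
move=> Hi Hr; rewrite /lbl3 ifT; last lia.
have -> : (r.*2 + i) %% 2 = i by lia.
by have -> : (r.*2 + i)./2 = r by lia.
Qed.

Lemma lbl3_spec m s id : lbl3 m ((tt m).*2 + s) id = tt m * SG s id + SS s id.
Proof.
rewrite /lbl3 ifF; last lia.
by have -> : (tt m).*2 + s - (tt m).*2 = s by lia.
Qed.

Lemma range3 m j id : 2 <= m -> j < m -> id < 10 ->
  1 <= lbl3 m j id <= 10 * m /\ (id < 4 -> lbl3 m j id <= 4 * m).
Proof.
move=> m2 jm Hid.
have Ht := tt_eq m2; have Ho : m %% 2 < 2 by lia.
case: (ltnP j (tt m).*2) => Hj.
  have Hi : j %% 2 < 2 by lia.
  have -> : j = (j./2).*2 + j %% 2 by lia.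
  rewrite lbl3_base //; last lia.
  have [HL1 HL2] := TB Hi Hid.
  move: HL1 HL2; set L := BB _ _ => HL1 HL2; clearbody L.
  set L1 := L.-1; have E1 : L1 = L.-1 by []; clearbody L1.
  have H19 : tt m * L1 <= tt m * 19 by apply: leq_mul => //; lia.
  have H7 : L <= 8 -> tt m * L1 <= tt m * 7 by move=> ?; apply: leq_mul => //; lia.
  have [Eo|Eo] : m %% 2 = 0 \/ m %% 2 = 1 by lia.
  1,2: rewrite Eo; case: ifP => Hid4; split => [|Hv]; try lia; try (have := H7 (HL2 Hid4); lia); idtac.
have Hs : j - (tt m).*2 < 3 by lia.
have -> : j = (tt m).*2 + (j - (tt m).*2) by lia.
rewrite lbl3_spec.
have [HS1 HS2] := TS Hs Hid; have HG := SG_SS Hs Hid.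
move: HS1 HS2 HG; set S := SS _ _; set G := SG _ _ => HS1 HS2 HG; clearbody S G.
have H20 : tt m * G <= tt m * 20 by apply: leq_mul => //; lia.
have H8 : S <= 12 -> tt m * G <= tt m * 8 by move=> ?; apply: leq_mul => //; lia.
split; first lia.
move=> Hid4; have := H8 (HS2 Hid4); lia.
Qed.

Lemma surj3 m k0 : 2 <= m -> 1 <= k0 <= 10 * m ->
  exists j id, [/\ j < m, id < 10 & lbl3 m j id = k0].
Proof.
move=> m2 Hk; have Ht := tt_eq m2.
have [Eo|Eo] : m %% 2 = 0 \/ m %% 2 = 1 by lia.
  have t0 : 0 < tt m by lia.
  have Ed := divn_eq k0.-1 (tt m).
  have Hw : k0.-1 %% tt m < tt m := ltn_pmod _ t0.
  have Hq : k0.-1 %/ tt m < 20 by rewrite ltn_divLR //; lia.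
  move: Ed Hw Hq; set q := _ %/ _; set w := _ %% _ => Ed Hw Hq; clearbody q w.
  have [i [id [Hi Hid HB]]] := @invB q.+1 (ltac:(lia)).
  have Hr : (if id < 4 then w else tt m - w.+1) < tt m by case: ifP => _; lia.
  exists ((if id < 4 then w else tt m - w.+1).*2 + i), id; split => //; first by lia.
  rewrite lbl3_base // HB Eo /=.
  case: (id < 4); lia.
have Ed := divn_eq k0.-1 ((tt m).*2 + 3).
have Hw : k0.-1 %% ((tt m).*2 + 3) < (tt m).*2 + 3 by apply: ltn_pmod; lia.
have Hq : k0.-1 %/ ((tt m).*2 + 3) < 10 by rewrite ltn_divLR //; lia.
move: Ed Hw Hq; set g := _ %/ _; set w := _ %% _ => Ed Hw Hq; clearbody g w.
have spec_case (c : nat) : 1 <= c <= 3 -> w = (tt m) * (c - 1) + (c - 1) ->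
    exists j id, [/\ j < m, id < 10 & lbl3 m j id = k0].
  move=> Hc Hwc.
  have [s [id [Hs Hid HS]]] := @invS (g * 3 + c) (ltac:(lia)).
  exists ((tt m).*2 + s), id; split => //; first by lia.
  rewrite lbl3_spec; have HG := SG_SS Hs Hid; rewrite HS in HG.
  have -> : SG s id = g.*2 + (c - 1) by lia.
  rewrite HS.
  have H3 : c = 1 \/ c = 2 \/ c = 3 by lia.
  by move: Hwc; case: H3 => [->|[->|->]] => Hwc; lia.
case: (posnP w) => Hw0.
  by apply: (spec_case 1) => //; lia.
case: (leqP w (tt m)) => Hw1.
  have [i [id [Hi Hid HB]]] := @invB g.*2.+1 (ltac:(lia)).
  have Hr : (if id < 4 then w.-1 else tt m - w) < tt m by case: ifP => _; lia.
  exists ((if id < 4 then w.-1 else tt m - w).*2 + i), id; split => //; first by lia.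
  rewrite lbl3_base // HB Eo /=.
  case: (id < 4); lia.
case: (posnP (w - (tt m).+1)) => Hw2.
  by apply: (spec_case 2) => //; lia.
case: (leqP w ((tt m).*2.+1)) => Hw3.
  have [i [id [Hi Hid HB]]] := @invB g.*2.+2 (ltac:(lia)).
  have Hr : (if id < 4 then w - (tt m).+2 else (tt m).*2.+1 - w) < tt m by case: ifP => _; lia.
  exists ((if id < 4 then w - (tt m).+2 else (tt m).*2.+1 - w).*2 + i), id; split => //; first by lia.
  rewrite lbl3_base // HB Eo /=.
  case: (id < 4); lia.
by apply: (spec_case 3) => //; lia.
Qed.

Lemma eq_succ' n (i j : 'I_n) : (j == succ i) = (nat_of_ord j == if i.+1 == n then 0 else i.+1).
Proof. by rewrite -succE. Qed.

Definition vl3 m (k : 'I_m) (a : option 'I_3) : nat :=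
  lbl3 m k (match a with None => 0 | Some i => (nat_of_ord i).+1 end).
Definition sp3 m (k : 'I_m) (i : 'I_3) : nat := lbl3 m k (nat_of_ord i).+4.
Definition rm3 m (k : 'I_m) (i : 'I_3) : nat := lbl3 m k (nat_of_ord i).+4.+3.

Lemma case3 m : 2 <= m -> C3_supermagic (mW_adj m 3).
Proof.
move=> m2.
apply: (@frame m 3 (@vl3 m) (@sp3 m) (@rm3 m) (27 * m + 3)) => //.
- case=> [[k [i|]]|[k [i|i]]]; rewrite /= /vl3 /elab /sp3 /rm3 /=.
  + have [H _] := @range3 m k i.+1 m2 (ltn_ord k) (ltac:(have := ltn_ord i; lia)); lia.
  + have [H _] := @range3 m k 0 m2 (ltn_ord k) (ltac:(lia)); lia.
  + have [H _] := @range3 m k i.+4 m2 (ltn_ord k) (ltac:(have := ltn_ord i; lia)); lia.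
  + have [H _] := @range3 m k i.+4.+3 m2 (ltn_ord k) (ltac:(have := ltn_ord i; lia)); lia.
- move=> k0 Hk; have [j [id [Hj Hid E]]] := @surj3 m k0 m2 (ltac:(lia)).
  case: (ltnP id 4) => H4.
    case: (posnP id) => H0.
      by exists (inl (Ordinal Hj, None)); rewrite /= /vl3 /= -E H0.
    have Hi : id.-1 < 3 by lia.
    exists (inl (Ordinal Hj, Some (Ordinal Hi))); rewrite /= /vl3 /= -E.
    by congr lbl3; lia.
  case: (ltnP id 7) => H7.
    have Hi : id - 4 < 3 by lia.
    exists (inr (Ordinal Hj, inl (Ordinal Hi))); rewrite /= /elab /sp3 /= -E.
    by congr lbl3; lia.
  have Hi : id - 7 < 3 by lia.
  exists (inr (Ordinal Hj, inr (Ordinal Hi))); rewrite /= /elab /rm3 /= -E.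
  by congr lbl3; lia.
- move=> k a; rewrite /vl3.
  have Hid : (match a with None => 0 | Some i => (nat_of_ord i).+1 end) < 4.
    by case: a => [i|] //; have := ltn_ord i; lia.
  have [_ H] := @range3 m k _ m2 (ltn_ord k) (leq_trans Hid (isT : 4 <= 10)).
  have := H Hid; lia.
- move=> k i; have [T0 T1 T2 _] := tri3 m2 (ltn_ord k).
  rewrite /vl3 /sp3 /rm3 succE.
  by case: i => [[|[|[|i]]] Hi] //=.
- move=> k i j l; have [_ _ _ TR] := tri3 m2 (ltn_ord k).
  rewrite !wadj_rim /ew /hw !eq_succ' /vl3 /rm3.
  case: i => [[|[|[|i]]] Hi] //; case: j => [[|[|[|j]]] Hj] //; case: l => [[|[|[|l]]] Hl] //=.
  all: move=> _ _ _; lia.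
Qed.

Unset Implicit Arguments.

Theorem theorem5 (n m : nat) :
  odd n -> 3 <= n -> 2 <= m -> C3_supermagic (mW_adj m n).
Proof.
move=> odn n3 m2.
have [->|ne] := eqVneq n 3; first exact: case3.
have no : n %% 2 = 1 by rewrite modn2 odn.
apply: case5 => //; lia.
Qed.
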